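(* Let $n\ge1$, $\mathbb{P}\in\mathcal{P}_n$, $\gamma\in S_{inv}$ and $\pi\in S_n$. Then $R_n(\mathbb{P})=R_n({}^{\gamma}\mathbb{P}\pi)$.
   Context: Scheduling on two machines with $n$ tasks. A processing-time matrix is $T\in\mathbb{R}_{++}^{2\times n}$; an allocation is $X\in\{0,1\}^{2\times n}$ with $X_{1j}+X_{2j}=1$; makespan $M(X,T)=\max_{i\in\{1,2\}}\sum_jX_{ij}T_{ij}$; $M^*(T)=\min_XM(X,T)$. $\mathcal{P}_n$ is the set of Borel probability measures on $\mathbb{R}^n$ supported in $\mathbb{R}_{++}^n$. For $\mathbb{P}\in\mathcal{P}_n$, algorithm $\mathcal{A}^{\mathbb{P}}$ draws $\mathbf{z}\sim\mathbb{P}$ and sends task $j$ to machine 1 iff $T_{1j}/T_{2j}<z_j$ (else to machine 2); $M(\mathbb{P},T)$ is its expected makespan, $R_n(\mathbb{P},T)=M(\mathbb{P},T)/M^*(T)$, $R_n(\mathbb{P})=\sup_TR_n(\mathbb{P},T)\in[1,\infty]$. $S_n$ is the symmetric group on $[n]$; for $\mathbf{z}\in\mathbb{R}^n$ and $\pi\in S_n$, $\mathbf{z}\pi$ is the vector obtained by permuting the entries of $\mathbf{z}$ by $\pi$. $S_{inv}=\{id,inv\}$ acts on $\mathbb{R}_{++}^n$ by ${}^{id}\mathbf{x}=\mathbf{x}$ and ${}^{inv}\mathbf{x}=(1/x_1,\dots,1/x_n)$. For $\mathbb{P}\in\mathcal{P}_n$, ${}^{\gamma}\mathbb{P}\pi\in\mathcal{P}_n$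 denotes the distribution of ${}^{\gamma}\mathbf{z}\pi$ where $\mathbf{z}\sim\mathbb{P}$. *)

(* Defs.v *)
From mathcomp Require Import all_boot all_order all_algebra all_fingroup.
From mathcomp Require Import all_classical all_reals all_analysis.
Import Order.TTheory GRing.Theory Num.Theory.
Set Implicit Arguments. Unset Strict Implicit. Unset Printing Implicit Defensive.
Local Open Scope ring_scope.
Local Open Scope classical_set_scope.

Section Scheduling.
Variables (R : realType) (n : nat).

(* processing-time matrices T in R^{2 x n}; row ord0 = machine 1, row 1 = machine 2 *)
Definition pos_mat (T : 'M[R]_(2, n)) : Prop := forall i j, 0 < T i j.

(* an allocation X in {0,1}^{2xn} with X_1j + X_2j = 1 is encoded by the
   machine index assigned to each task *)
Definition alloc := {ffun 'I_n -> 'I_2}.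

Definition makespan (X : alloc) (T : 'M[R]_(2, n)) : R :=
  \big[Num.max/0]_(i < 2) \sum_(j < n | X j == i) T i j.

Definition opt_makespan (T : 'M[R]_(2, n)) : R :=
  \big[Num.min/makespan [ffun=> ord0] T]_(X : alloc) makespan X T.

Definition alg_alloc (z : n.-tuple R) (T : 'M[R]_(2, n)) : alloc :=
  [ffun j => if T ord0 j / T 1 j < tnth z j then ord0 else 1].

Definition exp_makespan (P : set (n.-tuple R) -> \bar R) (T : 'M[R]_(2, n))
  : \bar R := (\int[P]_z (makespan (alg_alloc z T) T)%:E)%E.

Definition ratio (P : set (n.-tuple R) -> \bar R) (T : 'M[R]_(2, n)) : \bar R :=
  (exp_makespan P T * ((opt_makespan T)^-1)%:E)%E.

Definition worst_ratio (P : set (n.-tuple R) -> \bar R) : \bar R :=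
  ereal_sup [set ratio P T | T in pos_mat].

Definition supported_pos (P : set (n.-tuple R) -> \bar R) : Prop :=
  P [set z | forall j, 0 < tnth z j] = 1%E.

Definition perm_act (z : n.-tuple R) (pi : 'S_n) : n.-tuple R :=
  [tuple tnth z (pi j) | j < n].

Inductive Sinv := Sid | Sinv_inv.

Definition sinv_act (g : Sinv) (z : n.-tuple R) : n.-tuple R :=
  match g with
  | Sid => z
  | Sinv_inv => [tuple (tnth z j)^-1 | j < n]
  end.

(* Q is the distribution of ^g z pi where z ~ P *)
Definition is_transform_dist (P Q : set (n.-tuple R) -> \bar R)
  (g : Sinv) (pi : 'S_n) : Prop :=
  forall A : set (n.-tuple R), measurable A ->
    Q A = P ((fun z => perm_act (sinv_act g z) pi) @^-1` A).

End Scheduling.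

(* Main.v *)
Require Import Defs.
From mathcomp Require Import all_boot all_order all_algebra all_fingroup.
From mathcomp Require Import all_classical all_reals all_analysis.
From mathcomp Require Import measurable_realfun.
From mathcomp Require Import ring lra.
Import Order.TTheory GRing.Theory Num.Theory.
Set Implicit Arguments. Unset Strict Implicit. Unset Printing Implicit Defensive.
Local Open Scope ring_scope.
Local Open Scope classical_set_scope.

Lemma big2 (T : Type) (x : T) (op : T -> T -> T) (F : 'I_2 -> T) :
  \big[op/x]_(i < 2) F i = op (F ord0) (op (F 1) x).
Proof.
have -> : \big[op/x]_(i < 2) F i = \big[op/x]_(i < 2) F (inord (val i)).
  by apply: eq_bigr => i _; rewrite inord_val.
rewrite -(big_mkord xpredT (fun i => F (inord i))) unlock /=.
by congr (op (F _) (op (F _) x)); apply/val_inj; rewrite /= inordK.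
Qed.

Lemma ord2P (i : 'I_2) : i = ord0 \/ i = 1.
Proof. by case: i => -[|[|//]] p; [left|right]; apply/val_inj. Qed.

Section Comb.
Context (R : realType) (n : nat).
Implicit Types (T : 'M[R]_(2, n)) (X : alloc n).

Definition ssum X T (i : 'I_2) := \sum_(j < n | X j == i) T i j.

Lemma mkE X T : makespan X T = Num.max (ssum X T ord0) (Num.max (ssum X T 1) 0).
Proof. by rewrite /makespan big2. Qed.

Lemma mk_ge0 X T : 0 <= makespan X T.
Proof. by rewrite mkE !le_max lexx !orbT. Qed.

Lemma opt_le T X : opt_makespan T <= makespan X T.
Proof. exact: bigmin_le. Qed.

Lemma opt_le_opt T T' :
  (forall X, exists Y, makespan Y T' <= makespan X T) ->
  opt_makespan T' <= opt_makespan T.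
Proof.
move=> h; apply/bigmin_geP; split.
  by have [Y hY] := h [ffun=> ord0]; exact: le_trans (opt_le _ _) hY.
by move=> X _; have [Y hY] := h X; exact: le_trans (opt_le _ _) hY.
Qed.

Definition swapm T : 'M[R]_(2, n) := \matrix_(i < 2, j < n) T (rev_ord i) j.
Definition flip X : alloc n := [ffun j => rev_ord (X j)].

Lemma flipK X : flip (flip X) = X.
Proof. by apply/ffunP => j; rewrite !ffunE rev_ordK. Qed.

Lemma ssum_swap T X i : ssum (flip X) (swapm T) i = ssum X T (rev_ord i).
Proof.
apply: eq_big => j; last by rewrite mxE.
by rewrite ffunE -(inj_eq (@rev_ord_inj 2)) rev_ordK.
Qed.

Lemma makespan_swap T X : makespan (flip X) (swapm T) = makespan X T.
Proof.
rewrite !mkE !ssum_swap.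
have -> : rev_ord (1 : 'I_2) = ord0 by apply/val_inj.
have -> : rev_ord (ord0 : 'I_2) = 1 by apply/val_inj.
by rewrite maxCA.
Qed.

Lemma opt_swap T : opt_makespan (swapm T) = opt_makespan T.
Proof.
apply/le_anti/andP; split; apply: opt_le_opt => X.
  by exists (flip X); rewrite makespan_swap.
by exists (flip X); rewrite -makespan_swap flipK.
Qed.

Definition permm T (pi : 'S_n) : 'M[R]_(2, n) := \matrix_(i < 2, k < n) T i ((pi^-1)%g k).
Definition pall X (pi : 'S_n) : alloc n := [ffun k => X ((pi^-1)%g k)].

Lemma makespan_perm T X pi : makespan (pall X pi) (permm T pi) = makespan X T.
Proof.
rewrite !mkE /ssum.
have e : forall i, \sum_(k < n | pall X pi k == i) permm T pi i k =
   \sum_(j < n | X j == i) T i j.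
  move=> i; rewrite (reindex_inj (@perm_inj _ pi)) /=.
  by apply: eq_big => j; rewrite ?mxE ?ffunE permK.
by rewrite !e.
Qed.

Lemma opt_perm T pi : opt_makespan (permm T pi) = opt_makespan T.
Proof.
apply/le_anti/andP; split; apply: opt_le_opt => X.
  by exists (pall X pi); rewrite makespan_perm.
exists [ffun j => X (pi j)]; rewrite -(makespan_perm _ _ pi).
have -> : pall [ffun j => X (pi j)] pi = X by apply/ffunP => k; rewrite !ffunE permKV.
by [].
Qed.

Lemma alg_perm (w : n.-tuple R) T pi :
  makespan (alg_alloc (perm_act w pi) T) T =
  makespan (alg_alloc w (permm T pi)) (permm T pi).
Proof.
rewrite -(makespan_perm T _ pi); congr makespan.
apply/ffunP => k; rewrite !ffunE /perm_act tnth_mktuple permKV !mxE.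
by [].
Qed.

Lemma ssum_le X T T' i : (forall i j, T i j <= T' i j) -> ssum X T i <= ssum X T' i.
Proof. by move=> h; apply: ler_sum => j _. Qed.

Lemma mk_mono X T T' : (forall i j, T i j <= T' i j) -> makespan X T <= makespan X T'.
Proof.
move=> h; rewrite !mkE; apply: le_max2; first exact: ssum_le.
by apply: le_max2 => //; exact: ssum_le.
Qed.

Lemma mk_scale X T (c : R) : 0 <= c -> c * makespan X T = makespan X (c *: T).
Proof.
move=> c0; rewrite !mkE !maxr_pMr // mulr0 /ssum !mulr_sumr.
by congr (Num.max _ (Num.max _ _)); apply: eq_bigr => j _; rewrite mxE.
Qed.

Lemma opt_mono T T' : (forall i j, T i j <= T' i j) -> opt_makespan T <= opt_makespan T'.
Proof. by move=> h; apply: opt_le_opt => X; exists X; exact: mk_mono. Qed.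

Lemma mk_gt0 X T : (0 < n)%N -> pos_mat T -> 0 < makespan X T.
Proof.
move=> hn hT; set j0 := Ordinal hn.
have : 0 < ssum X T (X j0).
  rewrite /ssum (bigD1 j0) //= ltr_wpDr //; first by apply: sumr_ge0 => j _; exact/ltW.
rewrite mkE; case: (X j0) => -[|[|//]] p /= h.
  by rewrite lt_max; apply/orP; left; move: h; congr (0 < ssum _ _ _); apply/val_inj.
by rewrite !lt_max; apply/orP; right; apply/orP; left; move: h; congr (0 < ssum _ _ _); apply/val_inj.
Qed.

Lemma opt_gt0 T : (0 < n)%N -> pos_mat T -> 0 < opt_makespan T.
Proof.
move=> hn hT; apply/bigmin_gtP; split; first exact: mk_gt0.
by move=> X _; exact: mk_gt0.
Qed.

Definition Kb T := \sum_(j < n) (T ord0 j + T 1 j).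

Lemma mk_le_K X T : pos_mat T -> makespan X T <= Kb T.
Proof.
move=> hT; have K0 : 0 <= Kb T by apply: sumr_ge0 => j _; apply: addr_ge0; exact/ltW.
have hs : forall i, ssum X T i <= Kb T.
  move=> i; apply: le_trans (_ : \sum_(j < n) T i j <= _).
    rewrite /ssum big_mkcond /=; apply: ler_sum => j _.
    by case: ifP => _ //; exact/ltW.
  apply: ler_sum => j _; case: (ord2P i) => ->.
    by rewrite lerDl; exact/ltW.
  by rewrite lerDr; exact/ltW.
by rewrite mkE !ge_max !hs K0.
Qed.

End Comb.

Lemma measurable_invr (R : realType) : measurable_fun [set: R] (@GRing.inv R).
Proof.
have -> : (@GRing.inv R) = fun x : R => if x == 0 then 0 else x^-1.
  by apply: funext => x; case: eqP => // ->; rewrite invr0.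
apply: measurable_fun_if => //.
- apply: (measurable_fun_bool true); rewrite setTI.
  rewrite (_ : _ @^-1` _ = [set 0]); first exact: measurable_set1.
  apply/seteqP; split => x /=; first by move/eqP.
  by move=> ->; rewrite eqxx.
- rewrite setTI (_ : _ @^-1` [set false] = [set x | x != 0]).
    apply: measurable_realfun.open_continuous_measurable_fun; first exact: open_neq.
    by move=> x; rewrite inE => hx; exact: inv_continuous.
  apply/seteqP; split => x /=; first by move=> ->.
  by move/negbTE.
Qed.

Section Meas.
Context (R : realType) (n : nat).

Definition allocf (t : 'I_n -> R -> bool) (z : n.-tuple R) : alloc n :=
  [ffun j => if t j (tnth z j) then ord0 else 1].

Lemma meas_mk (T : 'M[R]_(2, n)) (t : 'I_n -> R -> bool) :
  (forall j, measurable_fun [set: R] (t j)) ->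
  measurable_fun [set: n.-tuple R] (fun z => makespan (allocf t z) T).
Proof.
move=> mt.
have ms : forall i, measurable_fun [set: n.-tuple R] (fun z => ssum (allocf t z) T i).
  move=> i; rewrite /ssum.
  have -> : (fun z => \sum_(j < n | allocf t z j == i) T i j) =
    (fun z => \sum_(j < n) (if t j (tnth z j) then (if ord0 == i then T i j else 0)
                            else (if 1 == i then T i j else 0))).
    apply: funext => z; rewrite big_mkcond; apply: eq_bigr => j _.
    by rewrite ffunE; case: (t j _).
  apply: measurable_sum => j; apply: measurable_fun_ifT; last 2 first.
  - exact: measurable_cst.
  - exact: measurable_cst.
  exact: measurableT_comp (mt j) (measurable_tnth j).
have -> : (fun z => makespan (allocf t z) T) =
  (fun z => Num.max (ssum (allocf t z) T ord0) (Num.max (ssum (allocf t z) T 1) 0)).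
  by apply: funext => z; rewrite mkE.
apply: measurable_realfun.measurable_maxr; first exact: ms.
by apply: measurable_realfun.measurable_maxr; [exact: ms|exact: measurable_cst].
Qed.

Definition phi (g : Sinv) (pi : 'S_n) (z : n.-tuple R) := perm_act (sinv_act g z) pi.

Lemma meas_phi g pi : measurable_fun [set: n.-tuple R] (phi g pi).
Proof.
apply/measurable_fun_tnthP => i.
have -> : (@tnth n R ^~ i \o phi g pi) = fun z => (match g with Sid => id | Sinv_inv => @GRing.inv R end) (tnth z (pi i)).
  apply: funext => z; rewrite /= /phi /perm_act tnth_mktuple.
  by case: g => //=; rewrite tnth_mktuple.
apply: measurableT_comp; last exact: measurable_tnth.
by case: g => //=; exact: measurable_invr.
Qed.

Lemma transfer (P Q : probability (n.-tuple R) R) g pi (F : n.-tuple R -> R) :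
  is_transform_dist P Q g pi -> measurable_fun [set: n.-tuple R] F ->
  (forall z, 0 <= F z) ->
  (\int[Q]_z (F z)%:E = \int[P]_z (F (phi g pi z))%:E)%E.
Proof.
move=> hQ mF F0.
have mphi := meas_phi g pi.
rewrite (eq_measure_integral (pushforward P (phi g pi))).
  have := @ge0_integral_pushforward _ _ _ _ R (phi g pi) mphi P setT (fun z => (F z)%:E) measurableT.
  rewrite preimage_setT; apply.
    exact/measurable_EFinP.
  by move=> y _; rewrite lee_fin.
by move=> A mA _; exact: hQ.
Qed.

End Meas.

Section Integ.
Context d (T : measurableType d) (R : realType) (P : probability T R).

Definition Ir (F : T -> R) : R := fine (\int[P]_z (F z)%:E)%E.

Lemma IrE (F : T -> R) (K : R) : measurable_fun setT F -> (forall z, 0 <= F z <= K) ->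
  (\int[P]_z (F z)%:E)%E = (Ir F)%:E /\ 0 <= Ir F <= K.
Proof.
move=> mF hF.
have h0 : (0 <= \int[P]_z (F z)%:E)%E.
  by apply: integral_ge0 => z _; rewrite lee_fin; case/andP: (hF z).
have hK : (\int[P]_z (F z)%:E <= K%:E)%E.
  apply: (@le_trans _ _ (\int[P]_z (cst K%:E z))%E).
    apply: (@ge0_le_integral _ _ _ P setT measurableT).
    - by move=> z _; rewrite lee_fin; case/andP: (hF z).
    - exact/measurable_EFinP.
    - exact: measurable_cst.
    - by move=> z _; rewrite lee_fin; case/andP: (hF z).
  rewrite integral_cst // -[X in (_ <= X)%E]mule1; apply: lee_wpmul2l; [by rewrite lee_fin; case/andP: (hF point) => /le_trans; apply | exact: probability_le1].
have fin : (\int[P]_z (F z)%:E)%E \is a fin_num.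
  by rewrite ge0_fin_numE // (le_lt_trans hK) // ltry.
split; first by rewrite /Ir fineK.
by apply/andP; split; rewrite -lee_fin /Ir fineK.
Qed.

Definition Pr (B : set T) : R := fine (P B).

Lemma PrE B : measurable B -> P B = (Pr B)%:E /\ 0 <= Pr B <= 1.
Proof.
move=> mB.
have h0 : (0 <= P B)%E := measure_ge0 P B.
have h1 : (P B <= 1)%E := probability_le1 P mB.
have fin : P B \is a fin_num by rewrite ge0_fin_numE // (le_lt_trans h1) // ltry.
split; first by rewrite /Pr fineK.
by apply/andP; split; rewrite -lee_fin /Pr fineK.
Qed.

Lemma int_key (I : finType) (F G : T -> R) (Bs : I -> set T) (c K KG : R) :
  measurable_fun setT F -> measurable_fun setT G -> (forall i, measurable (Bs i)) ->
  0 <= c -> (forall z, 0 <= F z <= K) -> (forall z, 0 <= G z <= KG) ->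
  (forall z, (forall i, ~ Bs i z) -> c * F z <= G z) ->
  c * Ir F <= Ir G + c * K * \sum_i Pr (Bs i).
Proof.
move=> mF mG mB c0 hF hG hz.
have K0 : 0 <= K by case/andP: (hF point) => /le_trans; apply.
have [eF _] := IrE mF hF.
have [eG _] := IrE mG hG.
have ind : forall z, c * F z <= G z + c * K * \sum_i (\1_(Bs i) z : R).
  move=> z; case: (pselect (exists i, Bs i z)) => [[i hi]|hn].
    apply: (le_trans _ (_ : c * K * 1 <= _)).
      by rewrite mulr1; apply: ler_wpM2l => //; case/andP: (hF z).
    apply: (le_trans _ (_ : 0 + _ <= _)); first by rewrite add0r.
    apply: lerD; first by case/andP: (hG z).
    apply: ler_wpM2l; first exact: mulr_ge0.
    rewrite (bigD1 i) //= indicE mem_set // lerDl.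
    by apply: sumr_ge0 => j _; rewrite indicE; case: (_ \in _).
  apply: (le_trans (hz z _)); first by move=> i hi; apply: hn; exists i.
  rewrite lerDl; apply: mulr_ge0; first exact: mulr_ge0.
  by apply: sumr_ge0 => j _; rewrite indicE; case: (_ \in _).
have : (\int[P]_z (c%:E * (F z)%:E) <= \int[P]_z ((G z)%:E + (c * K)%:E * \sum_i (\1_(Bs i) z)%:E))%E.
  apply: (@ge0_le_integral _ _ _ P setT measurableT).
  - by move=> z _; rewrite -EFinM lee_fin; apply: mulr_ge0 => //; case/andP: (hF z).
  - by apply: emeasurable_funM; [exact: measurable_cst | exact/measurable_EFinP].
  - apply: emeasurable_funD; first exact/measurable_EFinP.
    apply: emeasurable_funM; first exact: measurable_cst.
    apply: emeasurable_sum => i; apply/measurable_EFinP.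
    exact: measurable_indic.
  - move=> z _; rewrite sumEFin -!EFinM -EFinD lee_fin; exact: ind.
rewrite ge0_integralZl_EFin //; last 2 first.
  - by move=> z _; rewrite lee_fin; case/andP: (hF z).
  - exact/measurable_EFinP.
rewrite ge0_integralD //; last 4 first.
  - by move=> z _; rewrite lee_fin; case/andP: (hG z).
  - exact/measurable_EFinP.
  - move=> z _; apply: mule_ge0; first by rewrite lee_fin mulr_ge0.
    by apply: sume_ge0 => i _; rewrite lee_fin.
  - apply: emeasurable_funM; first exact: measurable_cst.
    apply: emeasurable_sum => i; apply/measurable_EFinP.
    exact: measurable_indic.
rewrite ge0_integralZl_EFin //; last 3 first.
  - by move=> z _; apply: sume_ge0 => i _; rewrite lee_fin.
  - apply: emeasurable_sum => i; apply/measurable_EFinP.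
    exact: measurable_indic.
  - exact: mulr_ge0.
rewrite ge0_integral_sum //; last first.
  by move=> i; apply/measurable_EFinP; exact: measurable_indic.
rewrite eF eG.
have -> : (\sum_(i <- index_enum I) \int[P]_z (\1_(Bs i) z)%:E = (\sum_i Pr (Bs i))%:E)%E.
  rewrite -sumEFin; apply: eq_bigr => i _.
  by rewrite integral_indic // setIT; case: (PrE (mB i)).
by rewrite -!EFinM -EFinD lee_fin.
Qed.

End Integ.

Section Small.
Context (R : realType) (n : nat) (P : probability (n.-tuple R) R).

Definition Dset (j : 'I_n) (lo hi : R) : set (n.-tuple R) := [set z | lo < tnth z j < hi].

Lemma Dset_meas j lo hi : measurable (Dset j lo hi).
Proof.
have -> : Dset j lo hi = [set: n.-tuple R] `&` ((fun z => tnth z j) @^-1` `]lo, hi[%classic).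
  rewrite /Dset; apply/seteqP; split => z /=.
    by move=> h; split => //; rewrite /= in_itv.
  by case=> _; rewrite /= in_itv.
by apply: measurable_tnth => //; exact: measurable_itv.
Qed.

Lemma small_measure (j : 'I_n) (lo hi : nat -> R) :
  {homo lo : a b / (a <= b)%N >-> a <= b} -> {homo hi : a b / (a <= b)%N >-> b <= a} ->
  (forall x, exists k, ~ (lo k < x < hi k)) ->
  forall e, 0 < e -> \forall k \near \oo, Pr P (Dset j (lo k) (hi k)) <= e.
Proof.
move=> hlo hhi hx e e0.
pose F k := Dset j (lo k) (hi k).
have mF : forall k, measurable (F k) by move=> k; exact: Dset_meas.
have cap : \bigcap_k F k = set0.
  apply/seteqP; split => z // hz; have [k hk] := hx (tnth z j).
  by apply: hk; exact: (hz k).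
have ni : nonincreasing_seq F.
  move=> a b ab; apply/subsetPset => z; rewrite /F /Dset /= => /andP[h1 h2].
  by rewrite (le_lt_trans (hlo _ _ ab) h1) (lt_le_trans h2 (hhi _ _ ab)).
have F0 : (P (F 0%N) < +oo)%E.
  by apply: (le_lt_trans (probability_le1 P (mF 0%N))); exact: ltry.
have mcap : measurable (\bigcap_k F k) by rewrite cap.
have cv := @nonincreasing_cvg_mu _ _ _ P F F0 mF mcap ni.
rewrite cap measure0 in cv.
move/fine_cvgP : cv => [_ cv].
move/cvgrPdist_le : cv => /(_ e e0).
apply: filterS => k /=; rewrite sub0r normrN => h.
by apply: le_trans h; exact: ler_norm.
Qed.
End Small.

Definition cf (R : realType) (k : nat) : R := 1 - (k.+2%:R)^-1.

Lemma cf_ge0 (R : realType) k : 0 < cf R k /\ cf R k <= 1.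
Proof.
rewrite /cf; split.
  rewrite subr_gt0 invf_lt1 ?ltr0n // ltr1n //.
by rewrite gerBl invr_ge0.
Qed.

Lemma real_key (R : realType) (a o K p eps d e : R) :
  0 < o -> 0 <= K -> 0 <= p -> p <= d -> 0 <= eps -> eps <= d -> 0 < e ->
  d * (`|a| + 2 * K + 1) <= e * o ->
  a / o <= (1 - eps) * (a - K * p) / o + e.
Proof.
move=> o0 K0 p0 pd e0 ed ee hd.
have ha : eps * a <= d * `|a|.
  apply: (le_trans (_ : eps * a <= eps * `|a|)); first by apply: ler_wpM2l => //; exact: ler_norm.
  by apply: ler_wpM2r => //.
have hK : K * p <= K * d by apply: ler_wpM2l.
have hKp : 0 <= eps * K * p by rewrite mulr_ge0 // mulr_ge0.
have d0 : 0 <= d by exact: le_trans pd.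
have hab : 0 <= `|a| := normr_ge0 a.
rewrite -(@ler_pM2r _ o) // mulrDl !mulfVK ?gt_eqF //.
nra.
Qed.

Lemma sup_approx (R : realType) (S : set \bar R) (a o K : R) (p : nat -> R) :
  0 < o -> 0 <= K -> (forall k, 0 <= p k) ->
  (forall e, 0 < e -> \forall k \near \oo, p k <= e) ->
  (forall k, exists2 s, S s & ((cf R k * (a - K * p k)) / o)%:E <= s)%E ->
  ((a / o)%:E <= ereal_sup S)%E.
Proof.
move=> o0 K0 p0 hp hS; apply/lee_addgt0Pr => e e0.
pose d := Num.min 1 (e * o / (`|a| + 2 * K + 1)).
have den0 : 0 < `|a| + 2 * K + 1.
  by rewrite ltr_wpDl // addr_ge0 // mulr_ge0.
have d0 : 0 < d by rewrite lt_min ltr01 /= divr_gt0 // mulr_gt0.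
have hd : d * (`|a| + 2 * K + 1) <= e * o.
  rewrite -ler_pdivlMr // /d ge_min; apply/orP; right; exact: lexx.
have h1 : \forall k \near \oo, p k <= d := hp d d0.
have h2 : \forall k \near \oo, (k.+1%:R)^-1 < d := @near_infty_natSinv_lt R (PosNum d0).
near \oo => k.
have [s Ss hs] := hS k.
apply: (le_trans _ (leeD (ereal_sup_ubound Ss) (lexx _))).
apply: (le_trans _ (leeD hs (lexx _))).
rewrite -EFinD lee_fin /cf.
have hpk : p k <= d by near: k; exact: h1.
have hk2 : (k.+1%:R)^-1 < d by near: k; exact: h2.
apply: (real_key o0 K0 (p0 k) hpk _ _ e0 hd).
- by rewrite invr_ge0.
- apply: (le_trans _ (ltW hk2)).
  by rewrite lef_pV2 ?posrE ?ltr0n // ler_nat.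
Unshelve. all: end_near.
Qed.

Section Tests.
Context (R : realType).

Lemma test_a (c u0 u1 x : R) : 0 < c < 1 -> 0 < u0 -> 0 < u1 -> 0 < x ->
  ~ (c * (u1 / u0) < x < u1 / u0) -> (c * u1 / u0 < x) = ~~ (u0 / u1 < x^-1).
Proof.
move=> /andP[c0 c1] h0 h1 x0 hD.
have r0 : 0 < u1 / u0 by rewrite divr_gt0.
rewrite -mulrA -[u0 / u1]invf_div ltf_pV2 ?posrE //.
case: (ltP x (u1 / u0)) => hx /=.
  by apply/negbTE/negP => h; apply: hD; rewrite h hx.
apply: (lt_le_trans _ hx); rewrite gtr_pMl //.
Qed.

Lemma test_b (c t0 t1 x : R) : 0 < c < 1 -> 0 < t0 -> 0 < t1 -> 0 < x ->
  ~ (t0 / t1 < x < t0 / t1 / c) -> (t0 / t1 < x) = ~~ (c * t1 / t0 < x^-1).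
Proof.
move=> /andP[c0 c1] h0 h1 x0 hD.
have q0 : 0 < t0 / t1 by rewrite divr_gt0.
have -> : c * t1 / t0 = (t0 / t1 / c)^-1.
  by field; rewrite ?gt_eqF //; apply/and3P; split; rewrite gt_eqF.
rewrite ltf_pV2 ?posrE ?divr_gt0 //.
case: (ltP x (t0 / t1 / c)) => hx /=.
  by apply/negbTE/negP => h; apply: hD; rewrite h hx.
apply: (lt_le_trans _ hx); rewrite ltr_pdivlMr // gtr_pMr //.
Qed.

Lemma cf_mono : {homo cf R : a b / (a <= b)%N >-> a <= b}.
Proof.
move=> a b ab; rewrite /cf lerD2l lerN2 lef_pV2 ?posrE ?ltr0n // Num.Theory.ler_nat !ltnS; exact: ab.
Qed.

Lemma cf_lt1 k : cf R k < 1.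
Proof. by rewrite /cf gtrBl invr_gt0 ltr0n. Qed.

Lemma cf_large (u : R) : u < 1 -> exists k, u < cf R k.
Proof.
move=> u1; case: (leP u 0) => u0.
  by exists 0%N; apply: le_lt_trans u0 _; case: (cf_ge0 R 0).
have e0 : 0 < 1 - u by rewrite subr_gt0.
have := @near_infty_natSinv_lt R (PosNum e0).
move=> /filter_ex [k hk]; exists k.
rewrite /cf; apply: (lt_le_trans (_ : u < 1 - (k.+1%:R)^-1)).
  have hk2 : (k.+1%:R)^-1 < 1 - u := hk.
  move: hk2; set y := (k.+1%:R)^-1 => hk2; lra.
by rewrite lerD2l lerN2 lef_pV2 ?posrE ?ltr0n // Num.Theory.ler_nat.
Qed.

End Tests.

Section Main.
Context (R : realType) (n : nat) (hn : (0 < n)%N) (P : probability (n.-tuple R) R)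
  (hP : supported_pos P).

Implicit Types M : 'M[R]_(2,n).

Definition rowsc (M : 'M[R]_(2,n)) (c : R) : 'M[R]_(2,n) :=
  \matrix_(i < 2, j < n) (if i == 1 then c * M i j else M i j).

Lemma rowsc_pos M c : 0 < c -> pos_mat M -> pos_mat (rowsc M c).
Proof. by move=> c0 hM i j; rewrite mxE; case: ifP => _; [exact: mulr_gt0 | exact: hM]. Qed.

Lemma swapm_pos M : pos_mat M -> pos_mat (swapm M).
Proof. by move=> hM i j; rewrite mxE. Qed.

Lemma permm_pos M pi : pos_mat M -> pos_mat (permm M pi).
Proof. by move=> hM i j; rewrite mxE. Qed.

Lemma rowsc_le M c : 0 <= c <= 1 -> pos_mat M -> forall i j, rowsc M c i j <= M i j.
Proof.
move=> /andP[c0 c1] hM i j; rewrite mxE; case: ifP => _ //.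
by apply: ler_piMl => //; exact/ltW.
Qed.

Lemma rowsc_ge M c : 0 <= c <= 1 -> pos_mat M -> forall i j, (c *: M) i j <= rowsc M c i j.
Proof.
move=> /andP[c0 c1] hM i j; rewrite !mxE; case: ifP => _ //.
by apply: ler_piMl => //; exact/ltW.
Qed.

Lemma mk_rowsc X M c : 0 <= c <= 1 -> pos_mat M ->
  c * makespan X M <= makespan X (rowsc M c).
Proof.
move=> hc hM; rewrite mk_scale; last by case/andP: hc.
by apply: mk_mono; exact: rowsc_ge.
Qed.

Lemma opt_rowsc M c : 0 <= c <= 1 -> pos_mat M ->
  opt_makespan (rowsc M c) <= opt_makespan M.
Proof. by move=> hc hM; apply: opt_mono; exact: rowsc_le. Qed.

Lemma swap0 M j : swapm M ord0 j = M 1 j.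
Proof. by rewrite mxE; congr (M _ j); apply/val_inj. Qed.
Lemma swap1 M j : swapm M 1 j = M ord0 j.
Proof. by rewrite mxE; congr (M _ j); apply/val_inj. Qed.
Lemma rowsc0 M c j : rowsc M c ord0 j = M ord0 j.
Proof. by rewrite mxE. Qed.
Lemma rowsc1 M c j : rowsc M c 1 j = c * M 1 j.
Proof. by rewrite mxE. Qed.

Definition pos_set : set (n.-tuple R) := [set z | forall j, 0 < tnth z j].

Lemma pos_meas : measurable pos_set.
Proof.
have -> : pos_set = \bigcap_(j in [set: 'I_n]) [set z | 0 < tnth z j].
  apply/seteqP; split => z /= h j.
    by move=> _; exact: h.
  by apply: h.
apply: fin_bigcap_measurable; first exact: finite_finset.
move=> j _.
have -> : [set z | 0 < tnth z j] = [set: n.-tuple R] `&` ((fun z => tnth z j) @^-1` `]0, +oo[%classic).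
  apply/seteqP; split => z /=.
    by move=> h; split => //; rewrite /= in_itv /= andbT.
  by case=> _; rewrite /= in_itv /= andbT.
by apply: measurable_tnth => //; exact: measurable_itv.
Qed.

Lemma PrN : Pr P (~` pos_set) = 0.
Proof.
have := probability_setC P pos_meas.
have -> : P pos_set = 1%E := hP.
by rewrite subee // /Pr => ->.
Qed.

Definition Bs (lo hi : nat -> 'I_n -> R) k (i : option 'I_n) : set (n.-tuple R) :=
  match i with None => ~` pos_set | Some j => Dset j (lo k j) (hi k j) end.

Lemma Bs_meas lo hi k i : measurable (Bs lo hi k i).
Proof. by case: i => [j|] /=; [exact: Dset_meas | exact: measurableC pos_meas]. Qed.

Lemma p_ge0 lo hi k : 0 <= \sum_i Pr P (Bs lo hi k i).
Proof.
apply: sumr_ge0 => i _; have [_ /andP[h _]] := PrE P (Bs_meas lo hi k i); exact: h.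
Qed.

Lemma p_small (lo hi : nat -> 'I_n -> R) :
  (forall j, {homo (fun k => lo k j) : a b / (a <= b)%N >-> a <= b}) ->
  (forall j, {homo (fun k => hi k j) : a b / (a <= b)%N >-> b <= a}) ->
  (forall j x, exists k, ~ (lo k j < x < hi k j)) ->
  forall e, 0 < e -> \forall k \near \oo, \sum_i Pr P (Bs lo hi k i) <= e.
Proof.
move=> hlo hhi hx e e0.
pose m : R := n.+1%:R.
have m0 : 0 < m by rewrite ltr0n.
have : \forall k \near \oo, forall i, Pr P (Bs lo hi k i) <= e / m.
  apply: filter_forall => -[j|].
    exact: (small_measure P j (hlo j) (hhi j) (hx j) (divr_gt0 e0 m0)).
  by apply: nearW => k; rewrite /= PrN divr_ge0 // ltW.
apply: filterS => k hk.
apply: (le_trans (ler_sum _ (fun i _ => hk i))).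
rewrite sumr_const card_option card_ord -mulr_natr mulfVK //.
by rewrite gt_eqF.
Qed.

End Main.

Lemma div_mono (R : realType) (x g o o' : R) : 0 < o' -> o' <= o -> 0 <= g -> x <= g ->
  x / o <= g / o'.
Proof.
move=> o'0 oo g0 xg; have o0 : 0 < o by exact: lt_le_trans oo.
case: (leP x 0) => x0.
  apply: (le_trans (_ : x / o <= 0)).
    by apply: mulr_le0_ge0 => //; rewrite invr_ge0 ltW.
  by rewrite divr_ge0 // ltW.
apply: (le_trans (_ : x / o <= g / o)); first by rewrite ler_pM2r ?invr_gt0.
by apply: ler_wpM2l => //; rewrite lef_pV2 ?posrE.
Qed.

Section Main2.
Context (R : realType) (n : nat) (hn : (0 < n)%N) (P : probability (n.-tuple R) R)
  (hP : supported_pos P).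
Implicit Types M U T : 'M[R]_(2,n).

Definition Aval g U : \bar R :=
  (\int[P]_z (makespan (alg_alloc (sinv_act g z) U) U)%:E)%E.
Definition Wset g : set (\bar R) :=
  [set (Aval g U * ((opt_makespan U)^-1)%:E)%E | U in @pos_mat R n].

Lemma alg_inv_eq U z : alg_alloc (sinv_act Sinv_inv z) U =
  allocf (fun j x => U ord0 j / U 1 j < x^-1) z.
Proof. by apply/ffunP => j; rewrite !ffunE /= tnth_mktuple. Qed.

Lemma alg_id_eq U z : alg_alloc z U = allocf (fun j x => U ord0 j / U 1 j < x) z.
Proof. by apply/ffunP => j; rewrite !ffunE. Qed.

Lemma mF_inv U : measurable_fun setT
  (fun z : n.-tuple R => makespan (alg_alloc (sinv_act Sinv_inv z) U) U).
Proof.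
have -> : (fun z : n.-tuple R => makespan (alg_alloc (sinv_act Sinv_inv z) U) U) =
  (fun z => makespan (allocf (fun j x => U ord0 j / U 1 j < x^-1) z) U).
  by apply: funext => z; rewrite alg_inv_eq.
apply: meas_mk => j; apply: measurable_fun_ltr; first exact: measurable_cst.
exact: measurable_invr.
Qed.

Lemma mF_id U : measurable_fun setT
  (fun z : n.-tuple R => makespan (alg_alloc z U) U).
Proof.
have -> : (fun z : n.-tuple R => makespan (alg_alloc z U) U) =
  (fun z => makespan (allocf (fun j x => U ord0 j / U 1 j < x) z) U).
  by apply: funext => z; rewrite alg_id_eq.
apply: meas_mk => j; apply: measurable_fun_ltr; first exact: measurable_cst.
exact: measurable_id.
Qed.

Lemma pos_of (lo hi : nat -> 'I_n -> R) k z : (forall i, ~ Bs lo hi k i z) -> forall j, 0 < tnth z j.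
Proof.
move=> h; have := h None; rewrite /Bs => hN.
by apply: contrapT => hc; apply: hN => hp; apply: hc; exact: hp.
Qed.

Lemma dir_a U : pos_mat U ->
  (Aval Sinv_inv U * ((opt_makespan U)^-1)%:E <= ereal_sup (Wset Sid))%E.
Proof.
move=> hU.
pose F := fun z : n.-tuple R => makespan (alg_alloc (sinv_act Sinv_inv z) U) U.
have mF : measurable_fun setT F := mF_inv U.
have hF : forall z, 0 <= F z <= Kb U by move=> z; rewrite mk_ge0 mk_le_K.
have [eF _] := IrE P mF hF.
have o0 := opt_gt0 hn hU.
have K0 : 0 <= Kb U by apply: sumr_ge0 => j _; apply: addr_ge0; exact/ltW.
rewrite (_ : Aval _ _ = (Ir P F)%:E); last exact: eF.
rewrite -EFinM.
pose lo k (j : 'I_n) := cf R k * (U 1 j / U ord0 j).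
pose hi (k : nat) (j : 'I_n) := U 1 j / U ord0 j.
have r0 : forall j, 0 < U 1 j / U ord0 j by move=> j; rewrite divr_gt0.
apply: (@sup_approx R _ (Ir P F) _ (Kb U) (fun k => \sum_i Pr P (Bs lo hi k i)) o0 K0).
- by move=> k; exact: p_ge0.
- apply: (p_small hP).
  + by move=> j a b ab; rewrite /lo; apply: ler_wpM2r; [exact/ltW | exact: cf_mono].
  + by move=> j a b ab; rewrite /hi.
  + move=> j x; case: (ltP x (hi 0%N j)) => hx; last first.
      by exists 0%N => /andP[_ h].
    have hi0 : 0 < hi 0%N j := r0 j.
    have hu : x / hi 0%N j < 1 by rewrite ltr_pdivrMr ?mul1r.
    have [k hk] := cf_large hu.
    exists k => /andP[h _]; move: h; rewrite /lo ltNge.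
    by move: hk; rewrite ltr_pdivrMr // => /ltW ->.
- move=> k.
  set c := cf R k.
  have [c0 c1] := cf_ge0 R k.
  have c01 : 0 <= c <= 1 by rewrite c1 ltW.
  set S := swapm (rowsc U c).
  have hS : pos_mat S by apply: swapm_pos; exact: rowsc_pos.
  exists (Aval Sid S * ((opt_makespan S)^-1)%:E)%E; first by exists S.
  pose G := fun z : n.-tuple R => makespan (alg_alloc z S) S.
  have mG : measurable_fun setT G := mF_id S.
  have hG : forall z, 0 <= G z <= Kb S by move=> z; rewrite mk_ge0 mk_le_K.
  have [eG /andP[G0 _]] := IrE P mG hG.
  have key := int_key P mF mG (Bs_meas lo hi k) (ltW c0) hF hG.
  have eA : Aval Sid S = (Ir P G)%:E by exact: eG.
  rewrite eA.
  rewrite -EFinM lee_fin.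
  have oS0 := opt_gt0 hn hS.
  have oS : opt_makespan S <= opt_makespan U.
    by rewrite /S opt_swap; exact: opt_rowsc.
  apply: div_mono => //.
  suff : c * Ir P F <= Ir P G + c * Kb U * \sum_i Pr P (Bs lo hi k i) by lra.
  apply: key => z hz.
  have zp := pos_of hz.
  have hD : forall j, ~ (lo k j < tnth z j < hi k j) by move=> j; exact: (hz (Some j)).
  rewrite /G -[alg_alloc z S]flipK makespan_swap.
  have -> : flip (alg_alloc z S) = alg_alloc (sinv_act Sinv_inv z) U.
    apply/ffunP => j; rewrite !ffunE /= tnth_mktuple swap0 swap1 rowsc0 rowsc1.
    have cc : 0 < c < 1 by rewrite c0 cf_lt1.
    rewrite (test_a cc (hU ord0 j) (hU 1 j) (zp j) (hD j)).
    by case: (_ < _^-1); apply/val_inj.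
  exact: mk_rowsc.
Qed.

Lemma dir_b T : pos_mat T ->
  (Aval Sid T * ((opt_makespan T)^-1)%:E <= ereal_sup (Wset Sinv_inv))%E.
Proof.
move=> hT.
pose F := fun z : n.-tuple R => makespan (alg_alloc z T) T.
have mF : measurable_fun setT F := mF_id T.
have hF : forall z, 0 <= F z <= Kb T by move=> z; rewrite mk_ge0 mk_le_K.
have [eF _] := IrE P mF hF.
have o0 := opt_gt0 hn hT.
have K0 : 0 <= Kb T by apply: sumr_ge0 => j _; apply: addr_ge0; exact/ltW.
have eA0 : Aval Sid T = (Ir P F)%:E by exact: eF.
rewrite eA0 -EFinM.
pose lo (k : nat) (j : 'I_n) := T ord0 j / T 1 j.
pose hi k (j : 'I_n) := T ord0 j / T 1 j / cf R k.
have q0 : forall j, 0 < T ord0 j / T 1 j by move=> j; rewrite divr_gt0.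
have cf0 : forall k, 0 < cf R k by move=> k; case: (cf_ge0 R k).
apply: (@sup_approx R _ (Ir P F) _ (Kb T) (fun k => \sum_i Pr P (Bs lo hi k i)) o0 K0).
- by move=> k; exact: p_ge0.
- apply: (p_small hP).
  + by move=> j a b ab; rewrite /lo.
  + move=> j a b ab; rewrite /hi; apply: ler_wpM2l; first exact/ltW.
    by rewrite lef_pV2 ?posrE ?cf0 //; exact: cf_mono.
  + move=> j x; case: (leP x (lo 0%N j)) => hx.
      by exists 0%N => /andP[].
    have x0 : 0 < x by exact: lt_trans (q0 j) hx.
    have hu : lo 0%N j / x < 1 by rewrite ltr_pdivrMr ?mul1r.
    have [k hk] := cf_large hu.
    exists k => /andP[_ h].
    have h1 : lo 0%N j < cf R k * x by rewrite -ltr_pdivrMr.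
    have : hi k j < x.
      by rewrite /hi ltr_pdivrMr ?cf0 // [x * _]mulrC.
    by move=> /(lt_trans h); rewrite ltxx.
- move=> k.
  set c := cf R k.
  have [c0 c1] := cf_ge0 R k.
  have c01 : 0 <= c <= 1 by rewrite c1 ltW.
  set S := swapm (rowsc T c).
  have hS : pos_mat S by apply: swapm_pos; exact: rowsc_pos.
  exists (Aval Sinv_inv S * ((opt_makespan S)^-1)%:E)%E; first by exists S.
  pose G := fun z : n.-tuple R => makespan (alg_alloc (sinv_act Sinv_inv z) S) S.
  have mG : measurable_fun setT G := mF_inv S.
  have hG : forall z, 0 <= G z <= Kb S by move=> z; rewrite mk_ge0 mk_le_K.
  have [eG /andP[G0 _]] := IrE P mG hG.
  have key := int_key P mF mG (Bs_meas lo hi k) (ltW c0) hF hG.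
  have eA : Aval Sinv_inv S = (Ir P G)%:E by exact: eG.
  rewrite eA -EFinM lee_fin.
  have oS0 := opt_gt0 hn hS.
  have oS : opt_makespan S <= opt_makespan T.
    by rewrite /S opt_swap; exact: opt_rowsc.
  apply: div_mono => //.
  suff : c * Ir P F <= Ir P G + c * Kb T * \sum_i Pr P (Bs lo hi k i) by lra.
  apply: key => z hz.
  have zp := pos_of hz.
  have hD : forall j, ~ (lo k j < tnth z j < hi k j) by move=> j; exact: (hz (Some j)).
  rewrite /G -[alg_alloc (sinv_act Sinv_inv z) S]flipK makespan_swap.
  have -> : flip (alg_alloc (sinv_act Sinv_inv z) S) = alg_alloc z T.
    apply/ffunP => j; rewrite !ffunE /= tnth_mktuple swap0 swap1 rowsc0 rowsc1.
    have cc : 0 < c < 1 by rewrite c0 cf_lt1.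
    rewrite (test_b cc (hT ord0 j) (hT 1 j) (zp j) (hD j)).
    by case: (_ < _^-1); apply/val_inj.
  exact: mk_rowsc.
Qed.

Lemma worstP : worst_ratio P = ereal_sup (Wset Sid).
Proof. by []. Qed.

Lemma worstQ (Q : probability (n.-tuple R) R) g pi : is_transform_dist P Q g pi -> worst_ratio Q = ereal_sup (Wset g).
Proof.
move=> hQ; congr ereal_sup.
have eR : forall T, Defs.ratio Q T =
    (Aval g (permm T pi) * ((opt_makespan (permm T pi))^-1)%:E)%E.
  move=> T; rewrite /Defs.ratio /exp_makespan opt_perm.
  have := transfer hQ (mF_id T) (fun z => mk_ge0 _ _).
  move=> ->; congr (_ * _)%E; rewrite /Aval.
  by apply: eq_integral => z _ /=; rewrite /phi alg_perm.
apply/seteqP; split => _ [T hT <-].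
  by exists (permm T pi); [exact: permm_pos | rewrite eR].
exists (permm T (pi^-1)%g); first exact: permm_pos.
rewrite eR; have -> : permm (permm T (pi^-1)%g) pi = T.
  by apply/matrixP => i k; rewrite !mxE invgK permKV.
by [].
Qed.

Lemma final (Q : probability (n.-tuple R) R) g pi : is_transform_dist P Q g pi -> worst_ratio P = worst_ratio Q.
Proof.
move=> hQ; rewrite (worstQ hQ) worstP; case: g hQ => hQ //.
apply/le_anti/andP; split.
  by apply: ge_ereal_sup => _ [T hT <-]; exact: dir_b hT.
by apply: ge_ereal_sup => _ [U hU <-]; exact: dir_a hU.
Qed.

End Main2.

Theorem theorem3 (R : realType) (n : nat) (hn : (0 < n)%N)
  (P : probability (n.-tuple R) R) (hP : supported_pos P)
  (g : Sinv) (pi : 'S_n) (Q : probability (n.-tuple R) R)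
  (hQ : is_transform_dist P Q g pi) :
  worst_ratio P = worst_ratio Q.
Proof. exact: (final hn hP hQ). Qed.
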